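(* Let $\lambda>0$ and let $\mathcal{H}=L^2(\mathbb{R})$ with orthonormal basis $\{|n\rangle\}_{n\in\mathbb{N}}$ (the eigenvectors of the quantum harmonic oscillator). Let $D\subset\mathcal{H}$ be the linear span of the $|n\rangle$, and let $D\odot D\subset \mathcal{H}\otimes\mathcal{H}$ be the algebraic tensor product. Define on $D$ the operators $a|n\rangle=\lambda\sqrt{n}\,|n-1\rangle$, $a^*|n\rangle=\lambda\sqrt{n+1}\,|n+1\rangle$, $q_1=\frac{1}{\sqrt2}(a+a^* )$, $q_2=\frac{1}{i\sqrt2}(a-a^* )$, and on $D\odot D$ the operator $$L^2=\sum_{\mu=1}^2\big(q_\mu\otimes\mathbb{I}-\mathbb{I}\otimes q_\mu\big)^2 .$$ For unit vectors $\psi,\varphi\in D$, write $\omega_\psi$ for the vector state $\omega_\psi(A)=\langle\psi,A\psi\rangle$, set $$d_{L^2}(\omega_\psi,\omega_\varphi)=\langle \psi\otimes\varphi,\,L^2\,(\psi\otimes\varphi)\rangle,$$ and define the modified quantum length $$d'_L(\omega_\psi,\omega_\varphi)=\sqrt{\Big|\,d_{L^2}(\omega_\psi,\omega_\varphi)-\sqrt{d_{L^2}(\omega_\psi,\omega_\psi)\,d_{L^2}(\omega_\varphi,\omega_\varphi)}\,\Big|}.$$ Then there is no self-adjoint operator $T$ on $\mathcal{H}\otimes\mathcal{H}$ whose domain contains $D\odot D$ such that $$\langle \psi\otimes\varphi,\,T\,(\psi\otimes\varphi)\rangle = d'_L(\omega_\psi,\omega_\varphi)^2$$ for all unit vectors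 $\psi,\varphi\in D$.
   Context: Here $\lambda$ plays the role of the Planck length $\lambda_P$; $a,a^*$ satisfy $[a,a^*]=\lambda^2\mathbb{I}$, and $H=\frac12(q_1^2+q_2^2)$ has eigenvalues $E_m=\lambda^2(m+\frac12)$ on $|m\rangle$. The operator $L^2$ is the square of the length operator $L=\sqrt{\sum_\mu (dq_\mu)^2}$ with $dq_\mu=q_\mu\otimes\mathbb{I}-\mathbb{I}\otimes q_\mu$ of the Moyal (quantum) plane; vector states $\omega_\psi$ are pure states of the algebra of compact operators on $L^2(\mathbb{R})$. *)

(* Defs.v *)
From Stdlib Require Import Reals.
From Coquelicot Require Import Coquelicot.

(* H = L^2(R) is modelled, via the orthonormal basis |n>, as l^2(N):
   a vector is its coefficient sequence.  H (x) H is modelled as l^2(N x N)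
   with |m> (x) |n> the basis vector at (m,n). *)
Definition H1 := nat -> C.
Definition H2 := nat -> nat -> C.

Fixpoint csum (f : nat -> C) (N : nat) : C :=
  match N with
  | O => RtoC 0
  | S k => Cplus (csum f k) (f k)
  end.

Definition ip1_part (x y : H1) (N : nat) : C :=
  csum (fun n => Cmult (Cconj (x n)) (y n)) N.
Definition ip1 (x y : H1) : C :=
  (real (Lim_seq (fun N => Re (ip1_part x y N))),
   real (Lim_seq (fun N => Im (ip1_part x y N)))).

Definition ip2_part (x y : H2) (N : nat) : C :=
  csum (fun m => csum (fun n => Cmult (Cconj (x m n)) (y m n)) N) N.
Definition ip2 (x y : H2) : C :=
  (real (Lim_seq (fun N => Re (ip2_part x y N))),
   real (Lim_seq (fun N => Im (ip2_part x y N)))).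

Fixpoint rsum (f : nat -> R) (N : nat) : R :=
  match N with
  | O => 0%R
  | S k => (rsum f k + f k)%R
  end.

Definition l2 (x : H2) : Prop :=
  exists M : R, forall N : nat,
    (rsum (fun m => rsum (fun n => Cmod (x m n) ^ 2) N) N <= M)%R.

Definition H2add (x y : H2) : H2 := fun m n => Cplus (x m n) (y m n).
Definition H2sub (x y : H2) : H2 := fun m n => Cminus (x m n) (y m n).
Definition H2scal (c : C) (x : H2) : H2 := fun m n => Cmult c (x m n).
Definition H2zero : H2 := fun _ _ => RtoC 0.

(* D = linear span of the |n> = finitely supported sequences *)
Definition inD (psi : H1) : Prop := exists N : nat, forall n, (N <= n)%nat -> psi n = RtoC 0.

Definition tens (psi phi : H1) : H2 := fun m n => Cmult (psi m) (phi n).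

(* algebraic tensor product D (.) D = finite sums of psi (x) phi, psi, phi in D *)
Definition inDD (F : H2) : Prop :=
  exists (K : nat) (ps qs : nat -> H1),
    (forall k, (k < K)%nat -> inD (ps k) /\ inD (qs k)) /\
    forall m n, F m n = csum (fun k => tens (ps k) (qs k) m n) K.

Definition a_op (lam : R) (psi : H1) : H1 :=
  fun n => Cmult (RtoC (lam * sqrt (INR (S n)))) (psi (S n)).
Definition adag_op (lam : R) (psi : H1) : H1 :=
  fun n => match n with
           | O => RtoC 0
           | S k => Cmult (RtoC (lam * sqrt (INR (S k)))) (psi k)
           end.
Definition Ci : C := (0%R, 1%R).
Definition q1 (lam : R) (psi : H1) : H1 :=
  fun n => Cmult (Cinv (RtoC (sqrt 2))) (Cplus (a_op lam psi n) (adag_op lam psi n)).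
Definition q2 (lam : R) (psi : H1) : H1 :=
  fun n => Cmult (Cinv (Cmult Ci (RtoC (sqrt 2))))
                 (Cminus (a_op lam psi n) (adag_op lam psi n)).

Definition opL (q : H1 -> H1) (F : H2) : H2 := fun m n => q (fun m' => F m' n) m.
Definition opR (q : H1 -> H1) (F : H2) : H2 := fun m n => q (F m) n.
Definition dq (q : H1 -> H1) (F : H2) : H2 := H2sub (opL q F) (opR q F).

Definition L2op (lam : R) (F : H2) : H2 :=
  H2add (dq (q1 lam) (dq (q1 lam) F)) (dq (q2 lam) (dq (q2 lam) F)).

(* d_{L^2}(omega_psi, omega_phi) = <psi(x)phi, L^2 psi(x)phi>  (a real number;
   we take its real part, the imaginary part being 0 as L^2 is symmetric) *)
Definition dL2 (lam : R) (psi phi : H1) : R :=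
  Re (ip2 (tens psi phi) (L2op lam (tens psi phi))).

Definition dprime (lam : R) (psi phi : H1) : R :=
  sqrt (Rabs (dL2 lam psi phi - sqrt (dL2 lam psi psi * dL2 lam phi phi))).

Definition selfadjoint (dom : H2 -> Prop) (T : H2 -> H2) : Prop :=
  (forall x, dom x -> l2 x /\ l2 (T x)) /\
  dom H2zero /\
  (forall x y, dom x -> dom y -> dom (H2add x y) /\ T (H2add x y) = H2add (T x) (T y)) /\
  (forall c x, dom x -> dom (H2scal c x) /\ T (H2scal c x) = H2scal c (T x)) /\
  (forall y, l2 y -> forall eps, 0 < eps ->
     exists x, dom x /\ Re (ip2 (H2sub x y) (H2sub x y)) < eps) /\
  (* T = T^* : symmetric, and dom(T^* ) is contained in dom T *)
  (forall x y, dom x -> dom y -> ip2 y (T x) = ip2 (T y) x) /\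
  (forall y z, l2 y -> l2 z -> (forall x, dom x -> ip2 y (T x) = ip2 z x) -> dom y).

(* Main.v *)
Require Import Defs.
From Stdlib Require Import Reals Lra Lia Psatz FunctionalExtensionality.
From Coquelicot Require Import Coquelicot.
Open Scope R_scope.

Lemma csum_ext f g N : (forall k, (k < N)%nat -> f k = g k) -> csum f N = csum g N.
Proof. induction N; intros H; simpl; auto. rewrite IHN by (intros; apply H; lia). rewrite H by lia. auto. Qed.

Lemma csum_stable f K N : (K <= N)%nat -> (forall k, (K <= k)%nat -> f k = RtoC 0) -> csum f N = csum f K.
Proof. induction N; intros HK H.
 - assert (K = 0%nat) by lia; subst; auto.
 - destruct (Nat.eq_dec K (S N)). subst; auto.
   simpl. rewrite IHN by (auto; lia). rewrite H by lia. apply Cplus_0_r. Qed.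

Lemma csum_zero f N : (forall k, f k = RtoC 0) -> csum f N = RtoC 0.
Proof. intros H; induction N; simpl; auto. rewrite IHN, H. apply Cplus_0_r. Qed.

Lemma lim_ev (u : nat -> R) K : (forall N, (K <= N)%nat -> u N = u K) -> real (Lim_seq u) = u K.
Proof. intros H. rewrite (Lim_seq_ext_loc u (fun _ => u K)). rewrite Lim_seq_const. auto.
 exists K. auto. Qed.

Lemma ip2_part_stable x y K N : (K <= N)%nat ->
  (forall m n, (K <= m)%nat \/ (K <= n)%nat -> x m n = RtoC 0) -> ip2_part x y N = ip2_part x y K.
Proof. intros HK H. unfold ip2_part.
 rewrite (csum_ext _ (fun m => csum (fun n => Cmult (Cconj (x m n)) (y m n)) K)).
 - apply csum_stable; auto. intros k Hk. apply csum_zero. intros n.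
   rewrite H by auto. unfold Cconj, Cmult, RtoC; simpl. f_equal; ring.
 - intros m Hm. apply csum_stable; auto. intros n Hn. rewrite H by auto.
   unfold Cconj, Cmult, RtoC; simpl. f_equal; ring.
Qed.

Lemma ip2_fin x y K : (forall m n, (K <= m)%nat \/ (K <= n)%nat -> x m n = RtoC 0) ->
  ip2 x y = ip2_part x y K.
Proof. intros H. unfold ip2. rewrite !(lim_ev _ K).
 - destruct (ip2_part x y K); auto.
 - intros; rewrite (ip2_part_stable x y K N); auto.
 - intros; rewrite (ip2_part_stable x y K N); auto.
Qed.

Lemma ip1_part_stable x y K N : (K <= N)%nat ->
  (forall m, (K <= m)%nat -> x m = RtoC 0) -> ip1_part x y N = ip1_part x y K.
Proof. intros HK H. unfold ip1_part. apply csum_stable; auto. intros k Hk.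
 rewrite H by auto. unfold Cconj, Cmult, RtoC; simpl. f_equal; ring. Qed.

Lemma ip1_fin x y K : (forall m, (K <= m)%nat -> x m = RtoC 0) ->
  ip1 x y = ip1_part x y K.
Proof. intros H. unfold ip1. rewrite !(lim_ev _ K).
 - destruct (ip1_part x y K); auto.
 - intros; rewrite (ip1_part_stable x y K N); auto.
 - intros; rewrite (ip1_part_stable x y K N); auto.
Qed.

Definition vec2 (c s : R) : H1 := fun n => match n with O => RtoC c | S O => RtoC s | _ => RtoC 0 end.

Lemma vec2_supp c s m : (2 <= m)%nat -> vec2 c s m = RtoC 0.
Proof. intros; destruct m as [|[|m]]; auto; lia. Qed.

Lemma tens_supp c s c' s' m n : (2 <= m)%nat \/ (2 <= n)%nat -> tens (vec2 c s) (vec2 c' s') m n = RtoC 0.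
Proof. intros [H|H]; unfold tens; [rewrite (vec2_supp c s m) by auto|rewrite (vec2_supp c' s' n) by auto]; unfold Cmult, RtoC; simpl; f_equal; ring. Qed.

Lemma dL2_vec2 lam c s c' s' : dL2 lam (vec2 c s) (vec2 c' s') =
  lam^2 * ((c'^2+s'^2)*(c^2+3*s^2) + (c^2+s^2)*(c'^2+3*s'^2) - 4*c*s*c'*s').
Proof.
 unfold dL2. rewrite (ip2_fin _ _ 2) by apply tens_supp.
 unfold ip2_part, csum, L2op, H2add, dq, H2sub, opL, opR, q1, q2, a_op, adag_op, tens, vec2.
 cbn -[sqrt INR].

 replace (INR 1) with 1 by (simpl; lra). replace (INR 2) with 2 by (simpl; lra).
 rewrite sqrt_1.
 assert (Hr : sqrt 2 * sqrt 2 = 2) by (apply sqrt_sqrt; lra).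
 assert (Hr0 : sqrt 2 <> 0) by (apply Rgt_not_eq, sqrt_lt_R0; lra).
 replace (sqrt 2 * (sqrt 2 * 1) + 0 * (0 * 1)) with 2 by lra.
 assert (H2 : sqrt 2 ^ 2 = 2) by (simpl; lra).
 assert (H4 : sqrt 2 ^ 4 = 4) by (replace 4%nat with (2*2)%nat by lia; rewrite pow_mult, H2; lra).
 assert (H6 : sqrt 2 ^ 6 = 8) by (replace 6%nat with (2*3)%nat by lia; rewrite pow_mult, H2; lra).
 assert (H8 : sqrt 2 ^ 8 = 16) by (replace 8%nat with (2*4)%nat by lia; rewrite pow_mult, H2; lra).
 field_simplify; [|auto]. rewrite H2, H4, H6, H8. field.
Qed.

Lemma ip1_vec2 c s : ip1 (vec2 c s) (vec2 c s) = RtoC (c^2+s^2).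
Proof. rewrite (ip1_fin _ _ 2) by apply vec2_supp.
 unfold ip1_part, csum, vec2, Cmult, Cplus, Cconj, RtoC; simpl. f_equal; ring. Qed.

Lemma sqrt_lam lam y z : 0 <= y*z -> sqrt (lam^2*y*(lam^2*z)) = lam^2 * sqrt (y*z).
Proof. intros H. replace (lam^2*y*(lam^2*z)) with ((lam^2)^2*(y*z)) by ring.
 rewrite sqrt_mult_alt by (apply pow2_ge_0). rewrite sqrt_pow2; auto. apply pow2_ge_0. Qed.

Lemma dprime_gen lam psi phi x y z : 0 <= y*z ->
  dL2 lam psi phi = lam^2*x -> dL2 lam psi psi = lam^2*y -> dL2 lam phi phi = lam^2*z ->
  dprime lam psi phi ^ 2 = lam^2 * Rabs (x - sqrt (y*z)).
Proof. intros Hyz H1 H2 H3. unfold dprime. rewrite H1, H2, H3, sqrt_lam by auto.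
 rewrite pow2_sqrt by apply Rabs_pos.
 replace (lam^2*x - lam^2*sqrt(y*z)) with (lam^2*(x - sqrt(y*z))) by ring.
 rewrite Rabs_mult, (Rabs_right (lam^2)); auto. apply Rle_ge, pow2_ge_0. Qed.

Definition E0 := vec2 1 0.
Definition E1 := vec2 0 1.

Lemma tens_lin c s : tens (vec2 c s) E0 =
  H2add (H2scal (RtoC c) (tens E0 E0)) (H2scal (RtoC s) (tens E1 E0)).
Proof. apply functional_extensionality; intro m; apply functional_extensionality; intro n.
 destruct m as [|[|m]]; destruct n as [|[|n]];
 unfold tens, E0, E1, vec2, H2add, H2scal, Cmult, Cplus, RtoC; simpl; f_equal; ring. Qed.

Lemma ip_lin c s (U V : H2) :
  Re (ip2 (tens (vec2 c s) E0) (H2add (H2scal (RtoC c) U) (H2scal (RtoC s) V))) =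
  c^2 * Re (U 0%nat 0%nat) + c*s*(Re (V 0%nat 0%nat) + Re (U 1%nat 0%nat)) + s^2 * Re (V 1%nat 0%nat).
Proof. rewrite (ip2_fin _ _ 2) by apply tens_supp.
 unfold ip2_part, csum, tens, E0, vec2, H2add, H2scal, Cmult, Cplus, Cconj, RtoC, Re; simpl. ring. Qed.

Lemma inD_vec2 c s : inD (vec2 c s).
Proof. exists 2%nat. apply vec2_supp. Qed.

Lemma inDD_tens p q : inD p -> inD q -> inDD (tens p q).
Proof. intros Hp Hq. exists 1%nat, (fun _ => p), (fun _ => q). split.
 - intros; auto.
 - intros m n. simpl. rewrite Cplus_0_l. auto. Qed.

Theorem mainTheorem1 (lam : R) (hlam : (0 < lam)%R) :
  ~ exists (dom : H2 -> Prop) (T : H2 -> H2),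
      selfadjoint dom T /\
      (forall F, inDD F -> dom F) /\
      (forall psi phi : H1, inD psi -> inD phi ->
         ip1 psi psi = RtoC 1 -> ip1 phi phi = RtoC 1 ->
         ip2 (tens psi phi) (T (tens psi phi)) = RtoC (dprime lam psi phi ^ 2)).
Proof.
 intros [dom [T [[Hl2 [H0 [Hadd [Hsc _]]]] [HD Hval]]]].
 assert (D0 : dom (tens E0 E0)) by (apply HD, inDD_tens; apply inD_vec2).
 assert (D1 : dom (tens E1 E0)) by (apply HD, inDD_tens; apply inD_vec2).
 set (u0 := Re (T (tens E0 E0) 0%nat 0%nat)).
 set (w := Re (T (tens E1 E0) 0%nat 0%nat) + Re (T (tens E0 E0) 1%nat 0%nat)).
 set (v1 := Re (T (tens E1 E0) 1%nat 0%nat)).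
 assert (key : forall c s, c^2+s^2 = 1 ->
   c^2*u0 + c*s*w + s^2*v1 = dprime lam (vec2 c s) E0 ^ 2).
 { intros c s Hcs.
   assert (HT : T (tens (vec2 c s) E0) = H2add (H2scal (RtoC c) (T (tens E0 E0))) (H2scal (RtoC s) (T (tens E1 E0)))).
   { rewrite tens_lin. destruct (Hsc (RtoC c) _ D0) as [Dc Ec]. destruct (Hsc (RtoC s) _ D1) as [Ds Es].
     destruct (Hadd _ _ Dc Ds) as [_ Ea]. rewrite Ea, Ec, Es. auto. }
   pose proof (Hval (vec2 c s) E0 (inD_vec2 c s) (inD_vec2 1 0)) as Hv.
   rewrite ip1_vec2, Hcs in Hv. unfold E0 in Hv. rewrite ip1_vec2 in Hv.
   replace (1^2+0^2) with 1 in Hv by ring. specialize (Hv eq_refl eq_refl).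
   fold E0 in Hv. rewrite HT in Hv. apply (f_equal Re) in Hv. rewrite ip_lin in Hv.
   unfold u0, w, v1. exact Hv. }
 assert (Hr2 : (sqrt 2 / 2)^2 = /2).
 { replace ((sqrt 2 / 2)^2) with (sqrt 2 * sqrt 2 / 4) by (simpl; field). rewrite sqrt_sqrt; lra. }
 set (r := sqrt 2 / 2) in *.
 pose proof (key 1 0 ltac:(ring)) as K0.
 pose proof (key 0 1 ltac:(ring)) as K1.
 pose proof (key r r ltac:(lra)) as Kp.
 pose proof (key r (-r) ltac:(replace ((-r)^2) with (r^2) by ring; lra)) as Km.
 unfold E0 in K0, K1, Kp, Km.
 rewrite (dprime_gen lam _ _ 2 2 2) in K0 by (try lra; rewrite dL2_vec2; ring).
 rewrite (dprime_gen lam _ _ 4 6 2) in K1 by (try lra; rewrite dL2_vec2; ring).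
 assert (Hr4 : r^4 = /4) by (replace (r^4) with ((r^2)^2) by ring; rewrite Hr2; field).
 rewrite (dprime_gen lam _ _ 3 3 2) in Kp by (try lra; rewrite dL2_vec2;
   replace (r * r * r * r) with (r^4) by ring; ring_simplify; rewrite ?Hr4, ?Hr2; field).
 rewrite (dprime_gen lam _ _ 3 3 2) in Km by (try lra; rewrite dL2_vec2;
   ring_simplify; rewrite ?Hr4, ?Hr2; field).
 replace (2*2) with (2^2) in K0 by ring. rewrite sqrt_pow2 in K0 by lra.
 replace (r*r) with (r^2) in Kp by ring. replace (r*(-r)) with (-r^2) in Km by ring.
 replace ((-r)^2) with (r^2) in Km by ring. rewrite Hr2 in Kp, Km.
 assert (E : lam^2 * Rabs (4 - sqrt (6*2)) = 2 * (lam^2 * Rabs (3 - sqrt (3*2)))).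
 { replace (1^2) with 1 in K0, K1 by ring. replace (0^2) with 0 in K0, K1 by ring.
   replace (2-2) with 0 in K0 by ring. rewrite Rabs_R0 in K0. lra. }
 assert (Hl : 0 < lam^2) by (apply pow_lt; lra).
 assert (E' : Rabs (4 - sqrt 12) = 2 * Rabs (3 - sqrt 6)).
 { replace (6*2) with 12 in E by ring. replace (3*2) with 6 in E by ring.
   apply (Rmult_eq_reg_l (lam^2)); lra. }
 pose proof (sqrt_sqrt 12 ltac:(lra)) as S12. pose proof (sqrt_pos 12).
 pose proof (sqrt_sqrt 6 ltac:(lra)) as S6. pose proof (sqrt_pos 6).
 assert (sqrt 12 < 4) by nra. assert (sqrt 6 < 3) by nra.
 rewrite !Rabs_right in E' by lra. nra.
Qed.
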